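(* Fix $\mu > 0$. Consider the following probabilistic model of distributed computation of $\mathbf{A}\mathbf{x}$ for $\mathbf{A} \in \mathbb{R}^{M\times N}$, $\mathbf{x}\in\mathbb{R}^N$, using $P$ processors. The time for a processor to compute a dot product of length $\ell$ is a random variable $T$ with $\Pr(T \le t) = 1 - \exp(-\mu(t/\ell - 1))$ for $t \ge \ell$ and $\Pr(T\le t)=0$ for $t<\ell$; the times of different processors are independent. The strategies are: (Uncoded) the $M$ rows are distributed among the $P$ processors, row $i$ being split into $P_i \in \{\lfloor P/M\rfloor, \lceil P/M\rceil\}$ blocks ($\sum_i P_i = P$), each processor computing one block (a dot product of length $N/P_i$); the computation finishes when all $P$ processors finish. (Repetition) each row is assigned to $P_i \in \{\lfloor P/M\rfloor, \lceil P/M\rceil\}$ processors ($\sum_i P_i=P$), each computing a full dot product of length $N$; the computation finishes when for every row at least one of its processors has finished. (MDS) each processor computes a dot product of length $N$; the computation finishes when any $M$ of the $P$ processors finish. (Short-Dot with parameter $K$) each processor computes a dot product of length $s = \frac{N}{P}(P-K+M)$; the computation finishes when any $K$ of the $P$ processors finish. Let $T_{UC}, T_{Rep}, T_{MDS}, T_{SD}$ denote the corresponding completion times. Suppose $M = M(P)$ scales as $P/\log P$ as $P \to \infty$, and Short-Dot is used with $K = P - M/2$. Then $\mathbb{E}[T_{SD}]/N = O\!\left(\frac{\log\log P}{\log P}\right)$, which tends to $0$ as $P\to\infty$, whereas $\mathbb{E}[T_{MDS}]/N$, $\mathbb{E}[T_{Rep}]/N$ and $\mathbb{E}[T_{UC}]/N$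 are all $\Omega(1)$, and so do not tend to $0$ as $P \to \infty$.
   Context: Asymptotic notation refers to $P \to \infty$ with $\mu$ fixed, uniformly in $N$. ''$M$ scales as $P/\log P$'' means $M(P) = \Theta(P/\log P)$; $M$ is taken to be an even positive integer so that $K = P - M/2$ is an integer (and $K > M$ holds for large $P$). $N$ is assumed divisible by the relevant block sizes so that dot-product lengths are integers. *)

(* Defs.v *)
From HB Require Import structures.
From mathcomp Require Import all_boot all_order all_algebra.
From mathcomp Require Import all_classical all_reals all_analysis.
Set Implicit Arguments. Unset Strict Implicit. Unset Printing Implicit Defensive.
Import Order.TTheory GRing.Theory Num.Theory.
Local Open Scope classical_set_scope.
Local Open Scope ring_scope.

Section Model.
Variable R : realType.

Definition shexp_cdf (mu l t : R) : R :=
  if t < l then 0 else 1 - expR (- (mu * (t / l - 1))).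

Definition has_proc_law d (T : measurableType d) (Pr : probability T R)
  (mu l : R) (X : T -> R) : Prop :=
  forall t : R, Pr [set w | X w <= t] = (shexp_cdf mu l t)%:E.

Definition indep_rvs d (T : measurableType d) (Pr : probability T R)
  (n : nat) (X : 'I_n -> T -> R) : Prop :=
  (forall j, measurable_fun setT (X j)) /\
  forall B : 'I_n -> set R, (forall j, measurable (B j)) ->
    Pr (\bigcap_(j in [set: 'I_n]) (X j @^-1` B j)) =
    (\prod_(j < n) fine (Pr (X j @^-1` B j)))%:E.

(* k-th smallest element (k >= 1) of a sequence of reals *)
Definition kth_smallest (k : nat) (s : seq R) : R :=
  nth 0 (sort <=%R s) k.-1.

Definition row_load (P M : nat) (rowOf : 'I_P -> 'I_M) (i : 'I_M) : nat :=
  #|[set j | rowOf j == i]|.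

(* admissible allocation: every row gets floor(P/M) or ceil(P/M) processors
   (the sum is automatically P since rowOf is a function on 'I_P) *)
Definition balanced_alloc (P M : nat) (rowOf : 'I_P -> 'I_M) : Prop :=
  forall i, (row_load rowOf i == (P %/ M)%N) || (row_load rowOf i == ((P + M.-1) %/ M)%N).

Definition T_UC (P : nat) T (X : 'I_P -> T -> R) (w : T) : R :=
  \big[Num.max/0]_(j < P) X j w.

Definition T_Rep (P M : nat) (rowOf : 'I_P -> 'I_M) T (X : 'I_P -> T -> R)
  (w : T) : R :=
  \big[Num.max/0]_(i < M)
     kth_smallest 1 [seq X j w | j <- enum 'I_P & rowOf j == i].

Definition T_MDS (P M : nat) T (X : 'I_P -> T -> R) (w : T) : R :=
  kth_smallest M [seq X j w | j <- enum 'I_P].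

Definition T_SD (P K : nat) T (X : 'I_P -> T -> R) (w : T) : R :=
  kth_smallest K [seq X j w | j <- enum 'I_P].

End Model.

(* Main.v *)
Require Import Defs.
From HB Require Import structures.
From mathcomp Require Import all_boot all_order all_algebra.
From mathcomp Require Import all_classical all_reals all_analysis.
From mathcomp Require Import zify ring lra.
From mathcomp Require Import measurable_realfun.
Import Order.TTheory GRing.Theory Num.Theory.
Local Open Scope classical_set_scope.
Local Open Scope ring_scope.

Lemma half_bound (M : nat) : (M <= 2 * (M %/ 2).+1)%N.
Proof.
have h := divn_eq M 2.
have h2 : (M %% 2 < 2)%N by rewrite ltn_mod.
move: h h2; move: (M %/ 2)%N (M %% 2)%N => q r h h2.
lia.
Qed.

Section Any.
Local Open Scope ereal_scope.
Context d (T : measurableType d) (R : realType) (mu : {measure set T -> \bar R}).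
Lemma le_integral_any (f g : T -> \bar R) : (forall x, f x <= g x) ->
  \int[mu]_(x in setT) f x <= \int[mu]_(x in setT) g x.
Proof.
move=> fg; rewrite /integral; apply: leeB.
- apply: ereal_sup_le => _ [h /= hf <-]; exists h => //= x; apply: le_trans (hf x) _.
  by rewrite !funeposE !patch_setT le_max2.
- apply: ereal_sup_le => _ [h /= hf <-]; exists h => //= x; apply: le_trans (hf x) _.
  by rewrite !funenegE !patch_setT le_max2 // leeN2.
Qed.
End Any.

Lemma kth_in (R : realType) k (s : seq R) : (0 < k <= size s)%N -> kth_smallest k s \in s.
Proof.
move=> /andP[k0 ks]; rewrite /kth_smallest -(mem_sort <=%R) mem_nth // size_sort.
by rewrite (leq_trans _ ks) // prednK.
Qed.

Lemma kth_tail (R : realType) k (s : seq R) t : (0 < k <= size s)%N ->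
  ((size s - k).+1)%:R * (kth_smallest k s - t) <= \sum_(x <- s) Num.max (x - t) 0.
Proof.
move=> /andP[k0 ks].
set ss := sort <=%R s.
have sorted_ss : sorted <=%R ss := sort_sorted (@le_total _ R) s.
have pe : perm_eq ss s by apply/permPl; exact: perm_sort.
rewrite -(perm_big _ pe) /= -(cat_take_drop k.-1 ss) big_cat /=.
apply: ler_wpDl; first by apply: sumr_ge0 => x _; rewrite le_max lexx orbT.
have kss : (k.-1 < size ss)%N by rewrite size_sort prednK.
have pth : path <=%R (nth 0 ss k.-1) (drop k.-1.+1 ss).
  by have := drop_sorted k.-1 sorted_ss; rewrite (drop_nth 0 kss).
have H : forall x, x \in drop k.-1 ss -> kth_smallest k s - t <= Num.max (x - t) 0.
  move=> x; rewrite (drop_nth 0 kss) inE => /orP[/eqP->|xin].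
    by rewrite le_max lexx.
  have := order_path_min (@le_trans _ R) pth => /allP /(_ x xin) hx.
  by rewrite le_max lerD2r hx.
apply: le_trans (_ : \sum_(x <- drop k.-1 ss | x \in drop k.-1 ss) (kth_smallest k s - t) <= _); last first.
  by rewrite [X in _ <= X]big_seq; apply: ler_sum => x /H.
rewrite -big_seq big_const_seq count_predT size_drop size_sort.
have -> : (size s - k.-1 = (size s - k).+1)%N by lia.
by rewrite iter_addr_0 mulr_natl.
Qed.

Lemma step_bound (R : realType) (x t0 dl : R) : 0 < dl ->
  ((Num.max (x - t0) 0)%:E <= dl%:E *
     \sum_(k <oo) (\1_[set y | t0 + k%:R * dl < y] x)%:E)%E.
Proof.
move=> dl0.
have [xt|xt] := leP x t0.
  have -> : Num.max (x - t0) 0 = 0 by apply/max_idPr; rewrite subr_le0.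
  apply: mule_ge0; first by rewrite lee_fin ltW.
  by apply: nneseries_ge0 => k _ _; rewrite lee_fin.
have ex : exists n, x - t0 <= n%:R * dl.
  exists (Num.truncn ((x - t0) / dl)).+1.
  by rewrite -ler_pdivrMr // ltW // truncnS_gt.
case: (ex_minnP ex) => n hn hmin.
have -> : Num.max (x - t0) 0 = x - t0 by apply/max_idPl; rewrite subr_ge0 ltW.
apply: le_trans (_ : (dl%:E * (n%:R)%:E <= _)%E).
  by rewrite -EFinM lee_fin mulrC.
apply: lee_pmul => //; first by rewrite lee_fin ltW.
apply: le_trans (@nneseries_lim_ge _ _ xpredT 0 n _); last by move=> k _ _; rewrite lee_fin.
rewrite sumEFin lee_fin.
have -> : n%:R = \sum_(0 <= i < n) (1 : R) by rewrite sumr_const_nat subn0.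
apply: ler_sum_nat => k /andP[_ kn] /=.
rewrite indicE mem_set //=.
rewrite ltNge; apply/negP => h.
have := hmin k; rewrite lerBlDl h => /(_ isT); rewrite leqNgt kn.
done.
Qed.

Lemma geo_partial (R : realType) (r : R) : 0 <= r -> r <= 1/2 ->
  forall n, \sum_(0 <= k < n) r ^+ k <= 2.
Proof.
move=> r0 r1; elim=> [|n IH]; first by rewrite big_nil.
rewrite big_nat_recl // expr0.
under eq_bigr do rewrite exprS.
rewrite -big_distrr /=.
have S0 : 0 <= \sum_(0 <= i < n) r ^+ i by apply: sumr_ge0 => i _; exact: exprn_ge0.
set S := \sum_(0 <= i < n) r ^+ i in IH S0 *.
nra.
Qed.

Lemma geo_bound (R : realType) (r : R) : 0 <= r -> r <= 1/2 ->
  (\sum_(k <oo) (r ^+ k)%:E <= 2%:E)%E.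
Proof.
move=> r0 r1; apply: lime_le.
  by apply: is_cvg_nneseries => k _; rewrite lee_fin exprn_ge0.
by apply: nearW => n; rewrite sumEFin lee_fin geo_partial.
Qed.

Set Implicit Arguments. Unset Strict Implicit.
Section Prob.
Context (R : realType) d (T : measurableType d) (Pr : probability T R).

Lemma meas_gtR (a : R) : measurable [set y : R | a < y].
Proof.
have -> : [set y : R | a < y] = `]a, +oo[%classic.
  by apply/seteqP; split=> y /=; rewrite in_itv /= andbT.
exact: measurable_itv.
Qed.

Lemma meas_leR (a : R) : measurable [set y : R | y <= a].
Proof.
have -> : [set y : R | y <= a] = `]-oo, a]%classic.
  by apply/seteqP; split=> y /=; rewrite in_itv /=.
exact: measurable_itv.
Qed.

Lemma meas_pre (X : T -> R) (B : set R) : measurable_fun setT X -> measurable B ->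
  measurable (X @^-1` B).
Proof. by move=> mX mB; have := mX measurableT _ mB; rewrite setTI. Qed.

Lemma prob_gt (mu l a : R) (X : T -> R) : has_proc_law Pr mu l X -> measurable_fun setT X ->
  l <= a -> Pr [set w | a < X w] = (expR (- (mu * (a / l - 1))))%:E.
Proof.
move=> hl mX la.
have -> : [set w | a < X w] = ~` [set w | X w <= a].
  by apply/seteqP; split=> w /=; rewrite ltNge => /negP.
rewrite probability_setC; last first.
  have := meas_pre mX (meas_leR a). done.

rewrite hl /shexp_cdf ltNge la /=.
by rewrite -EFinB; congr (_%:E); ring.
Qed.

Lemma prob_le0 (mu l t : R) (X : T -> R) : has_proc_law Pr mu l X ->
  t < l -> Pr [set w | X w <= t] = 0%E.
Proof. by move=> hl tl; rewrite hl /shexp_cdf tl. Qed.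

End Prob.

Section Prob2.
Context (R : realType) d (T : measurableType d) (Pr : probability T R).

Lemma meas_bigmin (I : Type) (r : seq I) (x0 : R) (F : I -> T -> R) :
  (forall i, measurable_fun setT (F i)) ->
  measurable_fun setT (fun w => \big[Num.min/x0]_(i <- r) F i w).
Proof.
move=> mF; elim: r => [|i r IH].
  by under eq_fun do rewrite big_nil; exact: measurable_cst.
by under eq_fun do rewrite big_cons; exact: measurable_minr.
Qed.

Lemma prob_all_gt (n : nat) (mu a : R) (l : 'I_n -> R) (X : 'I_n -> T -> R) :
  indep_rvs Pr X -> (forall j, has_proc_law Pr mu (l j) (X j)) -> (forall j, a < l j) ->
  Pr (\bigcap_(j in [set: 'I_n]) [set w | a < X j w]) = 1%E.
Proof.
move=> [mX hind] hl al.
rewrite (hind (fun _ => [set y | a < y])); last by move=> j; exact: meas_gtR.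
rewrite big1 // => j _.
have -> : X j @^-1` [set y | a < y] = ~` [set w | X j w <= a].
  by apply/seteqP; split=> w /=; rewrite ltNge => /negP.
rewrite probability_setC; last by have := meas_pre (mX j) (meas_leR a).
rewrite (prob_le0 (hl j) (al j)) sube0 //.
Qed.

Lemma part_MDS (mu : R) (P M N : nat) (X : 'I_P -> T -> R) :
  (0 < M)%N -> (M <= P)%N -> (0 < N)%N -> indep_rvs Pr X ->
  (forall j, has_proc_law Pr mu N%:R (X j)) ->
  (((1/2) * N%:R)%:E <= \int[Pr]_w (T_MDS M X w)%:E)%E.
Proof.
move=> M0 MP N0 hind hl.
have [mX _] := hind.
set a := (1/2) * N%:R.
have N0' : (0 < N%:R :> R) by rewrite ltr0n.
have aN : a < N%:R by rewrite /a; lra.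
set A := \bigcap_(j in [set: 'I_P]) [set w | a < X j w].
have mA : measurable A.
  apply: fin_bigcap_measurable; first exact: finite_finset.
  move=> j _; exact: (meas_pre (mX j) (meas_gtR a)).
have PrA : Pr A = 1%E by apply: (prob_all_gt hind hl) => j.
set L := fun w => \big[Num.min/a]_(j < P) X j w.
apply: (@le_trans _ _ (\int[Pr]_w (L w)%:E)%E); last first.
  apply: le_integral_any => w; rewrite lee_fin /T_MDS.
  have : kth_smallest M [seq X j w | j <- enum 'I_P] \in [seq X j w | j <- enum 'I_P].
    by apply: kth_in; rewrite M0 size_map size_enum_ord.
  by case/mapP => j _ ->; exact: bigmin_le.
have mL : measurable_fun setT L by exact: meas_bigmin.
rewrite (@ae_eq_integral _ _ _ Pr setT (cst a%:E)) //.
- rewrite integral_cst // [X in (_ <= _ * X)%E](_ : _ = 1%E) ?mule1 //.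
  exact: probability_setT.
- by apply/measurable_EFinP.
- exists (~` A); split => //; first exact: measurableC.
    transitivity (1 - Pr A)%E; first exact: probability_setC.
    by rewrite PrA subee.
  move=> w /= hw Aw; apply: hw => _; congr (_%:E).
  by apply: bigmin_eq_id => j _; apply: ltW; exact: (Aw j I).
Qed.

Lemma load_ge1 (P M : nat) (rowOf : 'I_P -> 'I_M) i : (0 < M)%N -> (M <= P)%N ->
  balanced_alloc rowOf -> (0 < row_load rowOf i)%N.
Proof.
move=> M0 MP /(_ i) /orP[] /eqP ->; rewrite divn_gt0 //.
by apply: leq_trans MP _; exact: leq_addr.
Qed.

Lemma load_leU (P M : nat) (rowOf : 'I_P -> 'I_M) i :
  balanced_alloc rowOf -> (row_load rowOf i <= (P + M.-1) %/ M)%N.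
Proof.
move=> /(_ i) /orP[] /eqP -> //; apply: leq_div2r; exact: leq_addr.
Qed.

Lemma part_Rep (mu : R) (P M N : nat) (rowOf : 'I_P -> 'I_M) (X : 'I_P -> T -> R) :
  (0 < M)%N -> (M <= P)%N -> balanced_alloc rowOf -> (0 < N)%N -> indep_rvs Pr X ->
  (forall j, has_proc_law Pr mu N%:R (X j)) ->
  (((1/2) * N%:R)%:E <= \int[Pr]_w (T_Rep rowOf X w)%:E)%E.
Proof.
move=> M0 MP hbal N0 hind hl.
have [mX _] := hind.
set a := (1/2) * N%:R.
have N0' : (0 < N%:R :> R) by rewrite ltr0n.
have aN : a < N%:R by rewrite /a; lra.
have a0 : 0 <= a by rewrite /a; lra.
set A := \bigcap_(j in [set: 'I_P]) [set w | a < X j w].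
have mA : measurable A.
  apply: fin_bigcap_measurable; first exact: finite_finset.
  move=> j _; exact: (meas_pre (mX j) (meas_gtR a)).
have PrA : Pr A = 1%E by apply: (prob_all_gt hind hl) => j.
have ind0 : forall w, setT w -> (0 <= (\1_A w : R)%:E)%E.
  by move=> w0 h0; rewrite lee_fin indicE ler0n.
have im : measurable_fun setT (fun w => (\1_A w : R)%:E).
  by apply/measurable_EFinP; exact: measurable_indic.
apply: (@le_trans _ _ (\int[Pr]_w (a%:E * (\1_A w)%:E))%E).
  rewrite (ge0_integralZl_EFin _ _ ind0 im) //.
  rewrite integral_indic // setIT.
  by rewrite [X in (_ <= _ * X)%E](_ : _ = 1%E) ?mule1.
apply: le_integral_any => w; rewrite -EFinM lee_fin /T_Rep indicE.
case: (boolP (w \in A)) => wA /=; last first.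
  by rewrite mulr0; exact: bigmax_ge_id.
rewrite mulr1.
have Aw : A w by rewrite inE in wA.
pose r0 : 'I_M := Ordinal M0.
rewrite (bigD1 r0) //= le_max; apply/orP; left.
set s := [seq X j w | j <- enum 'I_P & rowOf j == r0].
have : (0 < #|[set j | rowOf j == r0]|)%N by exact: (load_ge1 r0 M0 MP hbal).
case/card_gt0P => j0; rewrite inE => hj0.
have sz : (0 < size s)%N.
  have : X j0 w \in s by apply: map_f; rewrite mem_filter hj0 mem_enum.
  by case: (s) => // _ _; rewrite ltn0Sn.
have : kth_smallest 1 s \in s by apply: kth_in; rewrite sz.
case/mapP => j _ ->.
by apply: ltW; exact: (Aw j I).
Qed.

Lemma expRN1_le_half : expR (-1) <= 1/2 :> R.
Proof.
rewrite expRN.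
have e2 : 2 <= expR (1 : R) by have := expR_ge1Dx (1 : R); rewrite (_ : 1 + 1 = 2 :> R) //.
rewrite div1r lef_pV2 ?posrE ?expR_gt0 //.
Qed.

Lemma pow_le_expN1 (P : nat) : (0 < P)%N -> (1 - 1 / P%:R) ^+ P <= expR (-1) :> R.
Proof.
move=> P0.
have P0' : (0 < P%:R :> R) by rewrite ltr0n.
have h1 : 0 <= 1 - 1 / P%:R :> R.
  by rewrite subr_ge0 ler_pdivrMr // mul1r ler1n.
apply: (@le_trans _ _ (expR (- (1 / P%:R)) ^+ P)).
  apply: lerXn2r; rewrite ?nnegrE ?expR_ge0 //.
  by have := expR_ge1Dx (- (1 / P%:R) : R).
by rewrite -expRM_natr mulNr div1r mulVf ?gt_eqF.
Qed.

Lemma part_UC (mu : R) (P M N : nat) (rowOf : 'I_P -> 'I_M) (X : 'I_P -> T -> R) :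
  0 < mu -> (0 < M)%N -> (M <= P)%N -> (1 < P)%N -> balanced_alloc rowOf -> (0 < N)%N ->
  indep_rvs Pr X ->
  (forall j, has_proc_law Pr mu (N%:R / (row_load rowOf (rowOf j))%:R) (X j)) ->
  ((N%:R / ((P + M.-1) %/ M)%:R * (ln P%:R / mu) / 2)%:E <= \int[Pr]_w (T_UC X w)%:E)%E.
Proof.
move=> mu0 M0 MP P1 hbal N0 hind hl.
have [mX hindp] := hind.
set U := ((P + M.-1) %/ M)%:R : R.
have U0 : 0 < U.
  rewrite /U ltr0n divn_gt0 //; apply: leq_trans MP _; exact: leq_addr.
have N0' : (0 < N%:R :> R) by rewrite ltr0n.
have P0' : (1 < P%:R :> R) by rewrite ltr1n.
set Lp := ln (P%:R : R).
have Lp0 : 0 < Lp by exact: ln_gt0.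
set t := N%:R / U * (1 + Lp / mu).
have NU0 : 0 < N%:R / U by exact: divr_gt0.
have Lpm0 : 0 < Lp / mu by exact: divr_gt0.
have t0 : 0 <= t by apply: mulr_ge0; [exact: ltW | lra].
set C := \bigcap_(j in [set: 'I_P]) [set w | X j w <= t].
have mC : measurable C.
  apply: fin_bigcap_measurable; first exact: finite_finset.
  move=> j _; exact: (meas_pre (mX j) (meas_leR t)).
set B := ~` C.
have mB : measurable B by exact: measurableC.
have PrC : Pr C = (\prod_(j < P) shexp_cdf mu (N%:R / (row_load rowOf (rowOf j))%:R) t)%:E.
  rewrite /C (hindp (fun _ => [set y | y <= t])); last by move=> j; exact: meas_leR.
  by congr (_%:E); apply: eq_bigr => j _; rewrite (hl j).
have qb : forall j, 0 <= shexp_cdf mu (N%:R / (row_load rowOf (rowOf j))%:R) t <= 1 - 1 / P%:R.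
  move=> j.
  set lj := N%:R / (row_load rowOf (rowOf j))%:R.
  have ld1 := load_ge1 (rowOf j) M0 MP hbal.
  have ldU := load_leU (rowOf j) hbal.
  have ld0 : (0 < (row_load rowOf (rowOf j))%:R :> R) by rewrite ltr0n.
  have ldU' : ((row_load rowOf (rowOf j))%:R <= U) by rewrite /U ler_nat.
  have lj0 : 0 < lj by exact: divr_gt0.
  have NUlj : N%:R / U <= lj.
    rewrite /lj ler_pM2l // lef_pV2 ?posrE //.
  have hP : 1 / P%:R <= 1 :> R by rewrite ler_pdivrMr ?mul1r; lra.
  rewrite /shexp_cdf; case: ifP => [_|tl]; first by apply/andP; split => //; lra.
  have ltj : lj <= t by rewrite leNgt tl.
  have r1 : 1 <= t / lj by rewrite ler_pdivlMr // mul1r.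
  have r2 : t / lj <= 1 + Lp / mu.
    rewrite ler_pdivrMr //; apply: (@le_trans _ _ ((1 + Lp / mu) * (N%:R / U))).
      by rewrite /t mulrC.
    by apply: ler_wpM2l => //; lra.
  have r3 : mu * (t / lj - 1) <= Lp.
    have : mu * (t / lj - 1) <= mu * (Lp / mu) by apply: ler_wpM2l; lra.
    by rewrite mulrCA divff ?gt_eqF // mulr1.
  apply/andP; split.
    rewrite subr_ge0 expR_le1 oppr_le0; apply: mulr_ge0; lra.
  rewrite lerD2l lerN2.
  have -> : 1 / P%:R = expR (- Lp).
    by rewrite expRN lnK ?posrE ?div1r // (lt_trans _ P0').
  rewrite ler_expR; lra.
have prodb : \prod_(j < P) shexp_cdf mu (N%:R / (row_load rowOf (rowOf j))%:R) t <= 1 / 2.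
  apply: (@le_trans _ _ ((1 - 1 / P%:R) ^+ P)).
    have -> : (1 - 1 / P%:R) ^+ P = \prod_(j < P) (1 - 1 / P%:R) :> R.
      by rewrite prodr_const card_ord.
    by apply: ler_prod => j _; exact: qb.
  apply: le_trans (expRN1_le_half).
  by apply: pow_le_expN1; exact: ltnW.
set Pi := \prod_(j < P) shexp_cdf mu (N%:R / (row_load rowOf (rowOf j))%:R) t in PrC prodb.
have PrB : Pr B = (1 - Pi)%:E.
  transitivity (1 - Pr C)%E; first exact: probability_setC.
  by rewrite PrC EFinB.
have ind0 : forall w, setT w -> (0 <= (\1_B w : R)%:E)%E.
  by move=> w0 h0; rewrite lee_fin indicE ler0n.
have im : measurable_fun setT (fun w => (\1_B w : R)%:E).
  by apply/measurable_EFinP; exact: measurable_indic.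
apply: (@le_trans _ _ (\int[Pr]_w (t%:E * (\1_B w : R)%:E))%E).
  rewrite (ge0_integralZl_EFin _ _ ind0 im) // integral_indic // setIT.
  rewrite [X in (_ <= _ * X)%E](_ : _ = (1 - Pi)%:E); last exact: PrB.
  rewrite -EFinM lee_fin /t.
  set a := N%:R / U in NU0 *; set b := Lp / mu in Lpm0 *.
  have h : 1 / 2 <= 1 - Pi by lra.
  apply: (@le_trans _ _ (a * (1 + b) * (1 / 2))).
    rewrite mulrDr mulr1; nra.
  by apply: ler_wpM2l => //; apply: mulr_ge0; lra.
apply: le_integral_any => w; rewrite -EFinM lee_fin indicE.
case: (boolP (w \in B)) => wB /=; last first.
  by rewrite mulr0; exact: bigmax_ge_id.
rewrite mulr1.
have wB' : ~ C w by rewrite inE in wB.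
have [j hj] : exists j, t < X j w.
  apply: contrapT => hn; apply: wB' => j _; rewrite /= leNgt; apply/negP => hlt; apply: hn; exists j.
  done.
rewrite /T_UC (bigD1 j) //= le_max; apply/orP; left; exact: ltW.
Qed.

Lemma part_SD (mu : R) (P M N : nat) (X : 'I_P -> T -> R) :
  0 < mu -> (0 < M)%N -> (M <= P)%N -> (0 < N)%N -> indep_rvs Pr X ->
  (forall j, has_proc_law Pr mu
      (N%:R * (P%:R - (P - M %/ 2)%N%:R + M%:R) / P%:R) (X j)) ->
  (\int[Pr]_w (T_SD (P - M %/ 2) X w)%:E <=
     (N%:R * (P%:R - (P - M %/ 2)%N%:R + M%:R) / P%:R *
        (1 + (ln (P%:R / M%:R) + 4) / mu))%:E)%E.
Proof.
move=> mu0 M0 MP N0 hind hl.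
have [mX _] := hind.
set K := (P - M %/ 2)%N.
set s := N%:R * (P%:R - K%:R + M%:R) / P%:R.
have P0 : (0 < P)%N by exact: leq_trans MP.
have P0' : (0 < P%:R :> R) by rewrite ltr0n.
have M0' : (0 < M%:R :> R) by rewrite ltr0n.
have N0' : (0 < N%:R :> R) by rewrite ltr0n.
have KP : (K%:R <= P%:R :> R) by rewrite ler_nat /K leq_subr.
have s0 : 0 < s.
  rewrite /s; apply: divr_gt0 => //; apply: mulr_gt0 => //; lra.
set L := ln (P%:R / M%:R : R).
have L0 : 0 <= L.
  by apply: ln_ge0; rewrite ler_pdivlMr // mul1r ler_nat.
set t0 := s * (1 + L / mu).
set dl := s / mu.
have dl0 : 0 < dl by exact: divr_gt0.
have Lm0 : 0 <= L / mu by apply: divr_ge0 => //; exact: ltW.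
have st0 : s <= t0 by rewrite /t0; apply: ler_peMr; [exact: ltW | lra].
have t00 : 0 <= t0 by apply: le_trans st0; exact: ltW.
set m := (P - K).+1.
have m0 : (0 < m%:R :> R) by rewrite ltr0n.
set c := dl / m%:R.
have c0 : 0 < c by exact: divr_gt0.
pose E j (k : nat) := [set w | t0 + k%:R * dl < X j w].
have mE : forall j k, measurable (E j k).
  by move=> j k; exact: (meas_pre (mX j) (meas_gtR _)).
pose g j k w := (c * \1_(E j k) w)%:E.
have g0 : forall j k w, (0 <= g j k w)%E.
  by move=> j k w; rewrite lee_fin; apply: mulr_ge0; [exact: ltW | rewrite indicE ler0n].
have mg : forall j k, measurable_fun setT (g j k).
  move=> j k; apply/measurable_EFinP; apply: measurable_funM; first exact: measurable_cst.
  exact: measurable_indic.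
pose Z w := (t0%:E + \sum_(j < P) \sum_(k <oo) g j k w)%E.
apply: (@le_trans _ _ (\int[Pr]_w Z w)%E).
  apply: le_integral_any => w.
  set xs := [seq X j w | j <- enum 'I_P].
  have sz : size xs = P by rewrite size_map size_enum_ord.
  have hk : (0 < K <= size xs)%N.
    rewrite sz /K; apply/andP; split; last exact: leq_subr.
    rewrite subn_gt0; apply: leq_trans MP; rewrite ltn_Pdiv //.
  have := @kth_tail R K xs t0 hk; rewrite sz -/m big_map big_enum /=.
  have -> : \sum_(i in 'I_P) Num.max (X i w - t0) 0 = \sum_(i < P) Num.max (X i w - t0) 0.
    by apply: eq_bigl.
  move=> hY.
  have hY' : T_SD K X w <= t0 + (\sum_(j < P) Num.max (X j w - t0) 0) / m%:R.
    rewrite -lerBlDl ler_pdivlMr // mulrC.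
    by apply: le_trans hY; rewrite /T_SD -/xs.
  apply: (le_trans (y := (t0 + (\sum_(j < P) Num.max (X j w - t0) 0) / m%:R)%:E)).
    by rewrite lee_fin.
  rewrite /Z EFinD leeD2l // mulr_suml -sumEFin.
  apply: lee_sum => j _.
  have sb := @step_bound R (X j w) t0 dl dl0.
  apply: (le_trans (y := ((m%:R^-1)%:E * (dl%:E * \sum_(k <oo) (\1_[set y | t0 + k%:R * dl < y] (X j w))%:E))%E)).
    rewrite mulrC EFinM; apply: lee_wpmul2l; [by rewrite lee_fin invr_ge0 ltW | exact: sb].
  rewrite muleA -EFinM mulrC -/c.
  rewrite -nneseriesZl; last by move=> k _; rewrite lee_fin indicE ler0n.
  apply: lee_nneseries.
    by move=> k _ _; rewrite mule_ge0 // lee_fin ?indicE ?ler0n // ltW.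
  by move=> k _; rewrite /g -EFinM lee_fin ler_wpM2l ?(ltW c0) //.
have ms : forall j, measurable_fun setT (fun w => (\sum_(k <oo) g j k w)%E).
  move=> j; apply: ge0_emeasurable_sum => [k w h1 h2|k h1]; [exact: g0 | exact: mg].
have ms2 : measurable_fun setT (fun w => (\sum_(j < P) \sum_(k <oo) g j k w)%E).
  by apply: emeasurable_sum => j; exact: ms.
have s0j : forall j w, (0 <= \sum_(k <oo) g j k w)%E.
  by move=> j w; apply: nneseries_ge0 => k _ _; exact: g0.
rewrite /Z ge0_integralD //; try (by move=> w h; rewrite lee_fin);
  try (by move=> w h; apply: sume_ge0 => j h'; exact: s0j).
have -> : (\int[Pr]_w t0%:E = t0%:E)%E.
  rewrite (integral_cst Pr measurableT t0%:E).
  rewrite [X in (_ * X)%E](_ : _ = 1%E) ?mule1 //; exact: probability_setT.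
rewrite ge0_integral_sum //; try (by move=> j w h; exact: s0j).
have gint : forall j k, (\int[Pr]_w g j k w = (c * expR (- L) * expR (-1) ^+ k)%:E)%E.
  move=> j k.
  have i0 : forall w, setT w -> (0 <= (\1_(E j k) w : R)%:E)%E.
    by move=> w0 h0; rewrite lee_fin indicE ler0n.
  have im : measurable_fun setT (fun w => (\1_(E j k) w : R)%:E).
    by apply/measurable_EFinP; exact: measurable_indic.
  have sk : s <= t0 + k%:R * dl.
    by apply: le_trans st0 _; rewrite lerDl; apply: mulr_ge0 => //; exact: ltW.
  rewrite /g; under eq_integral do rewrite EFinM.
  rewrite (ge0_integralZl_EFin _ _ i0 im) ?(ltW c0) // integral_indic // setIT.
  rewrite [X in (_ * X)%E](_ : _ = (expR (- (mu * ((t0 + k%:R * dl) / s - 1))))%:E); last first.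
    exact: (prob_gt (hl j) (mX j) sk).
  rewrite -EFinM -mulrA; congr (_ * _)%:E.
  have -> : - (mu * ((t0 + k%:R * dl) / s - 1)) = - L + k%:R * (-1).
    by rewrite /t0 /dl; field; rewrite !gt_eqF.
  by rewrite expRD expRM_natl.
under eq_bigr do rewrite integral_nneseries //.
set a := c * expR (- L).
have a0 : 0 <= a by apply: mulr_ge0; [exact: ltW | exact: expR_ge0].
have hser : forall j : 'I_P, (\sum_(k <oo) (\int[Pr]_x g j k x) <= (a * 2)%:E)%E.
  move=> j; under eq_eseriesr do rewrite gint EFinM.
  rewrite nneseriesZl; last by move=> k _; rewrite lee_fin exprn_ge0 // expR_ge0.
  rewrite -/a [(a * 2)%:E]EFinM; apply: lee_wpmul2l; first by rewrite lee_fin.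
  apply: geo_bound; first exact: expR_ge0.
  exact: expRN1_le_half.
apply: (le_trans (y := (t0%:E + \sum_(j < P) (a * 2)%:E)%E)).
  by rewrite leeD2l //; apply: lee_sum => j _; exact: hser.
rewrite sumEFin -EFinD lee_fin sumr_const card_ord.
have PM0 : 0 < P%:R / M%:R :> R by exact: divr_gt0.
rewrite /a expRN lnK ?posrE // invf_div.
have hMm : M%:R <= 2 * m%:R :> R.
  rewrite -natrM ler_nat /m /K subKn; last first.
    by apply: leq_trans (leq_div M 2) MP.
  exact: half_bound.
have E1 : c * (M%:R / P%:R) * 2 *+ P = 2 * (s / mu) * (M%:R / m%:R).
  by rewrite -mulr_natr /c /dl; field; rewrite !gt_eqF.
rewrite E1.
have Mm : M%:R / m%:R <= 2 :> R by rewrite ler_pdivrMr // mulrC.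
have smu : 0 < s / mu by exact: divr_gt0.
apply: (le_trans (y := t0 + 4 * (s / mu))).
  rewrite lerD2l; move: smu Mm; set u := s / mu; set v := M%:R / m%:R => smu Mm; nra.
by rewrite /t0 le_eqVlt; apply/orP; left; apply/eqP; field; rewrite gt_eqF.
Qed.
End Prob2.

Section Asym.
Context (R : realType).

Lemma large_ln (B : R) : exists P1 : nat, forall P, (P1 <= P)%N ->
  (1 < P)%N /\ B <= ln (P%:R : R).
Proof.
exists (maxn 2 (Num.truncn (expR B)).+1) => P hP.
have h2 : (2 <= P)%N by apply: leq_trans hP; exact: leq_maxl.
have h3 : ((Num.truncn (expR B)).+1 <= P)%N by apply: leq_trans hP; exact: leq_maxr.
split => //.
have Ppos : (0 < P%:R :> R) by rewrite ltr0n; apply: leq_trans h2.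
rewrite -{1}[B]expRK ler_ln ?posrE ?expR_gt0 //.
apply: ltW; apply: lt_le_trans (truncnS_gt _) _; rewrite ler_nat //.
Qed.

Lemma M_le_P (c2 : R) (P M : nat) : (1 < P)%N -> c2 <= ln (P%:R : R) ->
  M%:R <= c2 * (P%:R / ln P%:R) -> (M <= P)%N.
Proof.
move=> P1 hc hM.
have Lp0 : 0 < ln (P%:R : R) by apply: ln_gt0; rewrite ltr1n.
have P0 : 0 < P%:R :> R by rewrite ltr0n; apply: ltnW.
rewrite -(ler_nat R); apply: le_trans hM _.
apply: (@le_trans _ _ (ln (P%:R : R) * (P%:R / ln P%:R))).
  by apply: ler_wpM2r => //; apply: divr_ge0; apply: ltW.
by rewrite mulrC divfK // gt_eqF.
Qed.

Lemma cross_bound (c1 : R) (P M : nat) : (1 < P)%N ->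
  c1 * (P%:R / ln P%:R) <= M%:R -> c1 * P%:R <= M%:R * ln (P%:R : R).
Proof.
move=> P1 hM.
have Lp0 : 0 < ln (P%:R : R) by apply: ln_gt0; rewrite ltr1n.
have -> : c1 * P%:R = c1 * (P%:R / ln P%:R) * ln (P%:R : R).
  by field; rewrite gt_eqF.
by rewrite ler_wpM2r // ltW.
Qed.

Lemma ratio_bound (c1 : R) (P M : nat) : 0 < c1 -> (1 < P)%N -> (0 < M)%N ->
  c1 * (P%:R / ln P%:R) <= M%:R -> P%:R / M%:R <= ln (P%:R : R) / c1.
Proof.
move=> c10 P1 M0 hM.
have Lp0 : 0 < ln (P%:R : R) by apply: ln_gt0; rewrite ltr1n.
have M0' : 0 < M%:R :> R by rewrite ltr0n.
have h : c1 * P%:R <= M%:R * ln (P%:R : R).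
  have -> : c1 * P%:R = c1 * (P%:R / ln P%:R) * ln (P%:R : R).
    by field; rewrite gt_eqF.
  by rewrite ler_wpM2r // ltW.
rewrite ler_pdivlMr // mulrAC ler_pdivrMr //.
by rewrite mulrC [X in _ <= X]mulrC.
Qed.

End Asym.

Theorem theorem4 (R : realType) (mu : R) (Mf : nat -> nat) :
  0 < mu ->
  (* M(P) = Theta(P / log P), M(P) an even positive integer (for large P) *)
  (exists (c1 c2 : R) (P0 : nat), 0 < c1 /\ 0 < c2 /\
     forall P : nat, (P0 <= P)%N ->
       (0 < Mf P)%N /\ ~~ odd (Mf P) /\
       c1 * (P%:R / ln P%:R) <= (Mf P)%:R /\
       (Mf P)%:R <= c2 * (P%:R / ln P%:R)) ->
  (* Short-Dot with K = P - M/2:  E[T_SD]/N = O(log log P / log P) *)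
  (exists (C : R) (P0 : nat), forall P : nat, (P0 <= P)%N ->
     let M := Mf P in let K := (P - M %/ 2)%N in
     forall N : nat, (0 < N)%N -> (P %| N * (P - K + M))%N ->
     forall (d : measure_display) (T : measurableType d)
            (Pr : probability T R) (X : 'I_P -> T -> R),
       indep_rvs Pr X ->
       (forall j, has_proc_law Pr mu
                    (N%:R * (P%:R - K%:R + M%:R) / P%:R) (X j)) ->
       (\int[Pr]_w (T_SD K X w)%:E <=
          (C * (ln (ln P%:R) / ln P%:R) * N%:R)%:E)%E) /\
  (* MDS:  E[T_MDS]/N = Omega(1) *)
  (exists (c : R) (P0 : nat), 0 < c /\ forall P : nat, (P0 <= P)%N ->
     let M := Mf P in
     forall N : nat, (0 < N)%N ->
     forall (d : measure_display) (T : measurableType d)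
            (Pr : probability T R) (X : 'I_P -> T -> R),
       indep_rvs Pr X ->
       (forall j, has_proc_law Pr mu N%:R (X j)) ->
       ((c * N%:R)%:E <= \int[Pr]_w (T_MDS M X w)%:E)%E) /\
  (* Repetition:  E[T_Rep]/N = Omega(1) *)
  (exists (c : R) (P0 : nat), 0 < c /\ forall P : nat, (P0 <= P)%N ->
     let M := Mf P in
     forall (rowOf : 'I_P -> 'I_M), balanced_alloc rowOf ->
     forall N : nat, (0 < N)%N ->
     forall (d : measure_display) (T : measurableType d)
            (Pr : probability T R) (X : 'I_P -> T -> R),
       indep_rvs Pr X ->
       (forall j, has_proc_law Pr mu N%:R (X j)) ->
       ((c * N%:R)%:E <= \int[Pr]_w (T_Rep rowOf X w)%:E)%E) /\
  (* Uncoded:  E[T_UC]/N = Omega(1) *)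
  (exists (c : R) (P0 : nat), 0 < c /\ forall P : nat, (P0 <= P)%N ->
     let M := Mf P in
     forall (rowOf : 'I_P -> 'I_M), balanced_alloc rowOf ->
     forall N : nat, (0 < N)%N ->
       (forall i : 'I_M, row_load rowOf i %| N)%N ->
     forall (d : measure_display) (T : measurableType d)
            (Pr : probability T R) (X : 'I_P -> T -> R),
       indep_rvs Pr X ->
       (forall j, has_proc_law Pr mu (N%:R / (row_load rowOf (rowOf j))%:R) (X j)) ->
       ((c * N%:R)%:E <= \int[Pr]_w (T_UC X w)%:E)%E).
Proof.
move=> mu0 [c1 [c2 [P0 [c10 [c20 hM]]]]].
have [P1 hP1] := large_ln (c1 + c2 + expR 1 + 1).
have e0 : 0 < expR 1 :> R by exact: expR_gt0.
pose Pb := maxn P0 P1.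
have facts : forall P, (Pb <= P)%N ->
   (1 < P)%N /\ (0 < Mf P)%N /\ (Mf P <= P)%N /\
       c1 <= ln (P%:R : R) /\ expR 1 <= ln (P%:R : R) /\
       c1 * (P%:R / ln P%:R) <= (Mf P)%:R /\ (Mf P)%:R <= c2 * (P%:R / ln P%:R).
  move=> P hP.
  have hP0 : (P0 <= P)%N by apply: leq_trans hP; exact: leq_maxl.
  have hP1' : (P1 <= P)%N by apply: leq_trans hP; exact: leq_maxr.
  have [P1P BL] := hP1 P hP1'.
  have [M0 [_ [lo hi]]] := hM P hP0.
  do !split => //; try lra.
  by apply: (@M_le_P R c2) => //; lra.
split.
  exists (3/2 * c2 * (1 + (5 + `|ln c1|) / mu)), Pb.
  move=> P hP; cbv zeta; move=> N N0 hdiv d T Pr X hind hl.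
  have [P1P [M0 [MP [c1L [eL [lo hi]]]]]] := facts P hP.
  apply: le_trans (part_SD mu0 M0 MP N0 hind hl) _.
  rewrite lee_fin.
  set M := Mf P in M0 MP lo hi *.
  set Lp := ln (P%:R : R) in c1L eL lo hi *.
  have Lp0 : 0 < Lp by apply: ln_gt0; rewrite ltr1n.
  have M0' : 0 < M%:R :> R by rewrite ltr0n.
  have N0' : 0 < N%:R :> R by rewrite ltr0n.
  have P0' : 0 < P%:R :> R by rewrite ltr0n; apply: ltnW.
  set LL := ln Lp.
  have hLL : 1 <= LL.
    have : ln (expR 1) <= LL by rewrite /LL ler_ln ?posrE ?expR_gt0.
    by rewrite expRK.
  have hhP : (M %/ 2 <= P)%N by apply: leq_trans (leq_div M 2) MP.
  have hh2 : ((M %/ 2)%N%:R * 2 <= M%:R :> R).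
    by rewrite -natrM ler_nat leq_trunc_div.
  have hK : P%:R - (P - M %/ 2)%N%:R + M%:R = (M %/ 2)%N%:R + M%:R :> R.
    by rewrite natrB // opprB addrCA subrr addr0.
  rewrite hK.
  set h := (M %/ 2)%N%:R in hh2 hK *.
  have h0 : 0 <= h by rewrite /h ler0n.
  set a := `|ln c1|.
  have a0 : 0 <= a by exact: normr_ge0.
  have hMP : M%:R / P%:R <= c2 / Lp.
    rewrite ler_pdivrMr //; apply: le_trans hi _.
    by rewrite le_eqVlt; apply/orP; left; apply/eqP; field; rewrite gt_eqF.
  have sb : N%:R * (h + M%:R) / P%:R <= N%:R * (3/2 * c2 / Lp).
    rewrite -mulrA; apply: ler_wpM2l; first exact: ltW.
    apply: (@le_trans _ _ (3/2 * (M%:R / P%:R))).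
      rewrite mulrA; apply: ler_wpM2r; first by rewrite invr_ge0 ltW.
      lra.
    have -> : 3/2 * c2 / Lp = 3/2 * (c2 / Lp) by rewrite mulrA.
    by apply: ler_wpM2l => //; lra.
  have s0 : 0 <= N%:R * (h + M%:R) / P%:R.
    by apply: divr_ge0; [apply: mulr_ge0; lra | exact: ltW].
  have PM0 : 0 < P%:R / M%:R :> R by exact: divr_gt0.
  have PM1 : 1 <= P%:R / M%:R :> R by rewrite ler_pdivlMr // mul1r ler_nat.
  have lPM0 : 0 <= ln (P%:R / M%:R : R) by exact: ln_ge0.
  have lPM : ln (P%:R / M%:R : R) <= LL + a.
    have rb := ratio_bound c10 P1P M0 lo.
    have Lc0 : 0 < Lp / c1 by exact: divr_gt0.
    apply: (@le_trans _ _ (ln (Lp / c1))).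
      by rewrite ler_ln ?posrE.
    rewrite lnM ?posrE ?invr_gt0 // lnV ?posrE // lerD2l /a.
    by rewrite -normrN ler_norm.
  have imu : 0 < mu^-1 by rewrite invr_gt0.
  have Fb : 1 + (ln (P%:R / M%:R) + 4) / mu <= LL * (1 + (5 + a) / mu).
    apply: (@le_trans _ _ (1 + (LL + a + 4) / mu)).
      rewrite lerD2l; apply: ler_wpM2r; first exact: ltW.
      lra.
    rewrite -subr_ge0.
    have -> : LL * (1 + (5 + a) / mu) - (1 + (LL + a + 4) / mu) = (LL - 1) * (1 + (4 + a) / mu).
      by field; rewrite gt_eqF.
    apply: mulr_ge0; first lra.
    apply: addr_ge0 => //; apply: divr_ge0; lra.
  have F0 : 0 <= 1 + (ln (P%:R / M%:R) + 4) / mu.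
    apply: addr_ge0 => //; apply: divr_ge0; lra.
  apply: le_trans (ler_pM s0 F0 sb Fb) _.
  rewrite le_eqVlt; apply/orP; left; apply/eqP.
  by field; rewrite !gt_eqF.
split.
  exists (1/2), Pb; split; first lra.
  move=> P hP N N0 d T Pr X hind hl.
  have [P1P [M0 [MP _]]] := facts P hP.
  by apply: part_MDS.
split.
  exists (1/2), Pb; split; first lra.
  move=> P hP rowOf hbal N N0 d T Pr X hind hl.
  have [P1P [M0 [MP _]]] := facts P hP.
  by apply: part_Rep.
exists (c1 / (4 * mu)), Pb; split; first by apply: divr_gt0 => //; lra.
move=> P hP; cbv zeta; move=> rowOf hbal N N0 hdiv d T Pr X hind hl.
have [P1P [M0 [MP [c1L [eL [lo hi]]]]]] := facts P hP.
apply: le_trans _ (part_UC mu0 M0 MP P1P hbal N0 hind hl).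
rewrite lee_fin.
set M := Mf P in M0 MP lo hi *.
set Lp := ln (P%:R : R) in c1L eL lo hi *.
have Lp0 : 0 < Lp by apply: ln_gt0; rewrite ltr1n.
have M0' : 0 < M%:R :> R by rewrite ltr0n.
have N0' : 0 < N%:R :> R by rewrite ltr0n.
have U1 : (0 < (P + M.-1) %/ M)%N.
  by rewrite divn_gt0 //; apply: leq_trans MP _; exact: leq_addr.
set U := ((P + M.-1) %/ M)%N in U1 *.
have U0 : 0 < U%:R :> R by rewrite ltr0n.
have hUM : U%:R * M%:R <= P%:R + M%:R :> R.
  rewrite -natrM -natrD ler_nat; apply: leq_trans (leq_trunc_div _ _) _.
  by rewrite leq_add2l leq_pred.
have hc := cross_bound P1P lo.
have h1 : c1 * (U%:R * M%:R) <= c1 * (P%:R + M%:R) by rewrite ler_wpM2l // ltW.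
have h2 : c1 * M%:R <= Lp * M%:R by rewrite ler_wpM2r // ltW.
have cU : c1 * U%:R <= 2 * Lp.
  rewrite -(ler_pM2r M0') -mulrA.
  have -> : 2 * Lp * M%:R = M%:R * Lp + Lp * M%:R by ring.
  apply: le_trans h1 _; rewrite mulrDr; exact: lerD.
have -> : N%:R / U%:R * (Lp / mu) / 2 = (N%:R / (2 * mu)) * (Lp / U%:R).
  by field; rewrite !gt_eqF.
have -> : c1 / (4 * mu) * N%:R = (N%:R / (2 * mu)) * (c1 / 2).
  by field; rewrite !gt_eqF.
apply: ler_wpM2l; first by apply: divr_ge0; lra.
by rewrite ler_pdivlMr // mulrAC ler_pdivrMr //; lra.
Qed.
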